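(* Let $p$ and $q$ be $n$-ary terms in the language $\{\wedge,\circ,+\}$ with $p$ $+$-free. A variety $\mathcal{V}$ satisfies $p\le q$ over compatible reflexive relations (i.e. $p(R_1,\dots,R_n)\subseteq q(R_1,\dots,R_n)$ for all $\mathbf{A}\in\mathcal{V}$ and all $R_1,\dots,R_n\in\mathrm{Crr}(\mathbf{A})$) if and only if there exists an integer $k\ge 2$ such that $\mathcal{V}$ realizes the set of equations $\mathrm{Eq}^R(p\le q^{(k)})$. Moreover, if $q$ is $+$-free, then $\mathcal{V}$ satisfies $p\le q$ over compatible reflexive relations if and only if $\mathcal{V}$ realizes $\mathrm{Eq}^R(p\le q)$.
   Context: $\mathrm{Crr}(\mathbf{A})$ is the set of compatible reflexive binary relations of $\mathbf{A}$. For relations $R,T$ and $k\ge1$, $R\circ^{(k)}T$ is the set of $(a,b)$ with $c_0=a,\dots,c_k=b$, $(c_i,c_{i+1})\in R$ for $i$ even, $\in T$ for $i$ odd; $\circ=\circ^{(2)}$, $R+T=\bigcup_k R\circ^{(k)}T$, $\wedge$ is intersection. For a $\{\wedge,\circ,+\}$-term $q$, $q^{(k)}$ is the $\{\wedge,\circ\}$-term obtained by replacing each occurrence of $+$ by $\circ^{(k)}$ (i.e. $u\circ v\circ u\circ\cdots$ with $k$ factors). Graph of a $\{\wedge,\circ\}$-term $p$: start with vertices $y_1,y_2$ and one edge $(y_1,y_2)$ labelled $p$; repeatedly pick an edge $(y_j,y_k)$ whose label $w$ is not a variable; if $w=u\wedge v$ replace it by two edges $(y_j,y_k)$ labelled $u$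 and $v$; if $w=u\circ v$ add a new vertex $y_t$ and replace the edge by $(y_j,y_t)$ labelled $u$ and $(y_t,y_k)$ labelled $v$. Stop when all labels are variables; the result is $\mathbf{G}(p)$, with vertices $y_1,\dots,y_m$. Given $\{\wedge,\circ\}$-terms $p,q$ in variables $X_1,\dots,X_n$: let $y_1,\dots,y_m$ be the vertices of $\mathbf{G}(p)$ and $z_1,\dots,z_u$ those of $\mathbf{G}(q)$ ($z_1,z_2$ initial). Set $T_s(p)=\{(x_i,x_j): (y_i,y_j)\text{ an edge of }\mathbf{G}(p)\text{ labelled }X_s\}$ (variables $x_1,\dots,x_m$). Associate to $z_i$ an $m$-ary term $t_i$, where $t_1=x_1$, $t_2=x_2$ and $t_3,\dots,t_u$ are unknown $m$-ary operation symbols; $Tt_s(q)=\{(t_i,t_j): (z_i,z_j)\text{ an edge of }\mathbf{G}(q)\text{ labelled }X_s\}$. Let $c(s)=|T_s(p)|$ and list $T_s(p)=\{(x_{i_1},x_{j_1}),\dots,(x_{i_{c(s)}},x_{j_{c(s)}})\}$. $\mathrm{Eq}^R(p\le q)$ consists, for every $s$ and every $(t_i,t_j)\in Tt_s(q)$, of a new unknown $(m+c(s))$-ary symbol $t_{(i,j,s)}$ and the two equations $t_{(i,j,s)}(x_1,\dots,x_m,x_{i_1},\dots,x_{i_{c(s)}})\approx t_i(x_1,\dots,x_m)$ and $t_{(i,j,s)}(x_1,\dots,x_m,x_{j_1},\dots,x_{j_{c(s)}})\approx t_j(x_1,\dots,x_m)$. A variety realizes this set if the unknown symbols can be interpreted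 as terms of the variety so that all equations hold identically in it. *)

(* Defs.v *)
From mathcomp Require Import all_boot.
Set Implicit Arguments. Unset Strict Implicit. Unset Printing Implicit Defensive.

Record signature := Signature { sym : Type; ar : sym -> nat }.

Inductive term (S : signature) (V : Type) : Type :=
| Var of V
| App (f : sym S) of ('I_(ar f) -> term S V).
Arguments Var {S V}.
Arguments App {S V}.

Record algebra (S : signature) := Algebra {
  carrier :> Type;
  op : forall f : sym S, ('I_(ar f) -> carrier) -> carrier }.

Fixpoint eval (S : signature) (A : algebra S) (V : Type) (env : V -> A)
    (t : term S V) : A :=
  match t with
  | Var v => env v
  | App f args => @op S A f (fun i => eval env (args i))
  end.

(* A variety is given by a set of identities Sigma (Birkhoff): its members are
   the algebras satisfying every identity of Sigma. *)
Definition identities (S : signature) := term S nat -> term S nat -> Prop.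

Definition in_variety (S : signature) (Sigma : identities S) (A : algebra S) :=
  forall s t, Sigma s t -> forall env : nat -> A, eval env s = eval env t.

Definition compatible (S : signature) (A : algebra S) (R : A -> A -> Prop) :=
  forall (f : sym S) (a b : 'I_(ar f) -> A),
    (forall i, R (a i) (b i)) -> R (@op S A f a) (@op S A f b).

Definition reflexiveP (A : Type) (R : A -> A -> Prop) := forall x, R x x.

Definition Crr (S : signature) (A : algebra S) (R : A -> A -> Prop) :=
  compatible R /\ reflexiveP R.

Inductive rterm (n : nat) : Type :=
| RVar of 'I_n
| RMeet of rterm n & rterm n
| RComp of rterm n & rterm n
| RPlus of rterm n & rterm n.
Arguments RVar {n}.
Arguments RMeet {n}.
Arguments RComp {n}.
Arguments RPlus {n}.

Fixpoint plus_free (n : nat) (t : rterm n) : bool :=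
  match t with
  | RVar _ => true
  | RMeet u v | RComp u v => plus_free u && plus_free v
  | RPlus _ _ => false
  end.

Fixpoint circk (A : Type) (k : nat) (R T : A -> A -> Prop) : A -> A -> Prop :=
  match k with
  | 0 => fun a b => a = b
  | k'.+1 => fun a b => exists c, R a c /\ circk k' T R c b
  end.

Fixpoint interp (n : nat) (A : Type) (R : 'I_n -> A -> A -> Prop) (t : rterm n)
    : A -> A -> Prop :=
  match t with
  | RVar i => R i
  | RMeet u v => fun a b => interp R u a b /\ interp R v a b
  | RComp u v => circk 2 (interp R u) (interp R v)
  | RPlus u v => fun a b => exists k, 1 <= k /\ circk k (interp R u) (interp R v) a b
  end.

Definition sat_Crr (S : signature) (Sigma : identities S) (n : nat)
    (p q : rterm n) :=
  forall A : algebra S, in_variety Sigma A ->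
  forall R : 'I_n -> A -> A -> Prop, (forall i, Crr (R i)) ->
  forall a b : A, interp R p a b -> interp R q a b.

Fixpoint circ_term (n : nat) (k : nat) (u v : rterm n) : rterm n :=
  match k with
  | 0 => u
  | 1 => u
  | k'.+1 => RComp u (circ_term k' v u)
  end.

Fixpoint qk (n : nat) (k : nat) (t : rterm n) : rterm n :=
  match t with
  | RVar i => RVar i
  | RMeet u v => RMeet (qk k u) (qk k v)
  | RComp u v => RComp (qk k u) (qk k v)
  | RPlus u v => circ_term k (qk k u) (qk k v)
  end.

(* Vertices are numbered 0, 1, 2, ... (0, 1 are the initial vertices y_1, y_2);
   edges are triples (source, target, variable label).  [gr t src tgt next]
   expands an edge (src,tgt) labelled t, new vertices numbered from [next];
   it returns the next free vertex number and the list of edges.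
   (The RPlus case is never used: G is only applied to +-free terms.) *)
Fixpoint gr (n : nat) (t : rterm n) (src tgt next : nat)
    : nat * seq (nat * nat * 'I_n) :=
  match t with
  | RVar s => (next, [:: (src, tgt, s)])
  | RMeet u v =>
      let r1 := gr u src tgt next in
      let r2 := gr v src tgt r1.1 in
      (r2.1, r1.2 ++ r2.2)
  | RComp u v | RPlus u v =>
      let r1 := gr u src next next.+1 in
      let r2 := gr v next tgt r1.1 in
      (r2.1, r1.2 ++ r2.2)
  end.

Definition nverts (n : nat) (t : rterm n) : nat := (gr t 0 1 2).1.
Definition gedges (n : nat) (t : rterm n) : seq (nat * nat * 'I_n) :=
  (gr t 0 1 2).2.

Definition Ts (n : nat) (p : rterm n) (s : 'I_n) : seq (nat * nat) :=
  [seq (e.1.1, e.1.2) | e <- gedges p & e.2 == s].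

(* Value of t_i(x_1..x_m) under a valuation a of the x's, where t_1 = x_1,
   t_2 = x_2 (vertices 0 and 1) and t_i is the m-ary term tv i otherwise. *)
Definition tval (S : signature) (A : algebra S) (m : nat)
    (tv : nat -> term S 'I_m) (i : nat) (a : nat -> A) : A :=
  if i == 0 then a 0 else if i == 1 then a 1
  else eval (fun j : 'I_m => a (nat_of_ord j)) (tv i).

(* Valuation of the m + c variables of t_(i,j,s): the first m are x_1..x_m,
   the remaining c are x_{i_1},...,x_{i_c} (proj = fst) or
   x_{j_1},...,x_{j_c} (proj = snd). *)
Definition ext_env (A : Type) (m : nat) (L : seq (nat * nat))
    (proj : nat * nat -> nat) (a : nat -> A) : 'I_(m + size L) -> A :=
  fun v => match split v with
           | inl j => a (nat_of_ord j)
           | inr l => a (proj (nth (0, 0) L l))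
           end.

Definition realizes (S : signature) (Sigma : identities S) (n : nat)
    (p q : rterm n) : Prop :=
  let m := nverts p in
  exists tv : nat -> term S 'I_m,
  forall (i j : nat) (s : 'I_n), (i, j, s) \in gedges q ->
  exists te : term S 'I_(m + size (Ts p s)),
  forall A : algebra S, in_variety Sigma A ->
  forall a : nat -> A,
    eval (@ext_env A m (Ts p s) fst a) te = tval tv i a /\
    eval (@ext_env A m (Ts p s) snd a) te = tval tv j a.

(* Main.v *)
Require Import Defs.
From mathcomp Require Import all_boot zify.
From Stdlib Require Import FunctionalExtensionality PropExtensionality ProofIrrelevance ClassicalEpsilon.
Set Implicit Arguments. Unset Strict Implicit.

Section Graph.
Variables (n : nat) (A : Type) (R : 'I_n -> A -> A -> Prop).

Definition edges_ok (val : nat -> A) (l : seq (nat * nat * 'I_n)) :=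
  forall e, e \in l -> R e.2 (val e.1.1) (val e.1.2).

Lemma edges_ok_cat val l1 l2 : edges_ok val (l1 ++ l2) <-> edges_ok val l1 /\ edges_ok val l2.
Proof.
split.
- move=> H; split=> e He; apply: H; rewrite mem_cat He ?orbT //.
- move=> [H1 H2] e; rewrite mem_cat => /orP [] He; [exact: H1|exact: H2].
Qed.

Lemma gr_range (t : rterm n) src tgt next :
  src < next -> tgt < next ->
  next <= (gr t src tgt next).1 /\
  forall e, e \in (gr t src tgt next).2 -> e.1.1 < (gr t src tgt next).1 /\ e.1.2 < (gr t src tgt next).1.
Proof.
elim: t src tgt next => [s|u IHu v IHv|u IHu v IHv|u IHu v IHv] src tgt next hs ht /=.
- by split=> // e; rewrite inE => /eqP -> /=.
- have [h1 r1] := IHu src tgt next hs ht.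
  have [h2 r2] := IHv src tgt (gr u src tgt next).1 (leq_trans hs h1) (leq_trans ht h1).
  split; first exact: leq_trans h1 h2.
  move=> e; rewrite mem_cat => /orP [] He; last exact: r2.
  by have [a b] := r1 e He; split; apply: leq_trans h2.
all: have hn : next < next.+1 by [].
all: have hs' : src < next.+1 by lia.
all: have [h1 r1] := IHu src next next.+1 hs' hn.
all: have [h2 r2] := IHv next tgt (gr u src next next.+1).1 h1 (leq_trans ht (ltnW h1)).
all: split; first by lia.
all: move=> e; rewrite mem_cat => /orP [] He; last exact: r2.
all: by have [a b] := r1 e He; split; apply: leq_trans h2.
Qed.

Lemma graph_bwd (t : rterm n) src tgt next val :
  plus_free t -> edges_ok val (gr t src tgt next).2 -> interp R t (val src) (val tgt).
Proof.
elim: t src tgt next => [s|u IHu v IHv|u IHu v IHv|u IHu v IHv] src tgt next //= hp.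
- by move=> H; apply: (H (src, tgt, s)); rewrite inE.
- case/andP: hp => pu pv; case/edges_ok_cat => H1 H2.
  by split; [exact: IHu H1 | exact: IHv H2].
- case/andP: hp => pu pv; case/edges_ok_cat => H1 H2.
  exists (val next); split; first exact: IHu H1.
  by exists (val tgt); split=> //; exact: IHv H2.
Qed.

Lemma graph_fwd (t : rterm n) src tgt next val0 :
  plus_free t -> src < next -> tgt < next -> interp R t (val0 src) (val0 tgt) ->
  exists val, (forall v, v < next -> val v = val0 v) /\ edges_ok val (gr t src tgt next).2.
Proof.
elim: t src tgt next val0 => [s|u IHu v IHv|u IHu v IHv|u IHu v IHv] src tgt next val0 //= hp hs ht.
- move=> H; exists val0; split=> // e; rewrite inE => /eqP -> //.
- case/andP: hp => pu pv [H1 H2].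
  have [val1 [a1 e1]] := IHu src tgt next val0 pu hs ht H1.
  have [h1 r1] := gr_range u hs ht.
  have H2' : interp R v (val1 src) (val1 tgt) by rewrite a1 // a1 //.
  have [val2 [a2 e2]] := IHv src tgt (gr u src tgt next).1 val1 pv (leq_trans hs h1) (leq_trans ht h1) H2'.
  exists val2; split.
    by move=> w hw; rewrite a2 ?a1 //; exact: leq_trans hw h1.
  apply/edges_ok_cat; split=> // e He.
  have [b1 b2] := r1 e He; rewrite !a2 //; exact: e1.
- case/andP: hp => pu pv [c [H1 [d [H2 Hd]]]]; subst d.
  pose val0' := fun w => if w == next then c else val0 w.
  have hn : next < next.+1 by [].
  have hs' : src < next.+1 by lia.
  have H1' : interp R u (val0' src) (val0' next).
    by rewrite /val0' eqxx; have -> : (src == next) = false by lia.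
  have [val1 [a1 e1]] := IHu src next next.+1 val0' pu hs' hn H1'.
  have [h1 r1] := gr_range u hs' hn.
  have H2' : interp R v (val1 next) (val1 tgt).
    rewrite !a1 /val0' ?eqxx; try lia.
    by have -> : (tgt == next) = false by lia.
  have [val2 [a2 e2]] := IHv next tgt (gr u src next next.+1).1 val1 pv h1 (leq_trans ht (ltnW h1)) H2'.
  exists val2; split.
    move=> w hw; rewrite a2 ?a1 /val0'; try lia.
    by have -> : (w == next) = false by lia.
  apply/edges_ok_cat; split=> // e He.
  have [b1 b2] := r1 e He; rewrite !a2 //; exact: e1.
Qed.
End Graph.

Lemma circk_mono (A : Type) k (U U' V V' : A -> A -> Prop) :
  (forall x y, U x y -> U' x y) -> (forall x y, V x y -> V' x y) ->
  forall x y, circk k U V x y -> circk k U' V' x y.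
Proof.
elim: k U U' V V' => [|k IH] U U' V V' hU hV x y //= [c [h1 h2]].
exists c; split; [exact: hU | exact: IH h2].
Qed.

Lemma circ_term_sub n (A : Type) (R : 'I_n -> A -> A -> Prop) k (u v : rterm n) x y :
  interp R (circ_term k u v) x y -> exists k', 1 <= k' /\ circk k' (interp R u) (interp R v) x y.
Proof.
elim: k u v x y => [|k IH] u v x y /=.
  by move=> H; exists 1; split=> //; exists y.
case: k IH => [|k] IH /=.
  by move=> H; exists 1; split=> //; exists y.
move=> [c [H1 [d [H2 Hd]]]]; subst d.
have [k' [hk H]] := IH v u c y H2.
by exists k'.+1; split=> //; exists c.
Qed.

Lemma qk_sub n (A : Type) (R : 'I_n -> A -> A -> Prop) k (t : rterm n) x y :
  interp R (qk k t) x y -> interp R t x y.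
Proof.
elim: t x y => [s|u IHu v IHv|u IHu v IHv|u IHu v IHv] x y //=.
- by move=> [h1 h2]; split; [exact: IHu|exact: IHv].
- exact: (circk_mono (k:=2) IHu IHv).
- move=> H0; have [k' [hk H]] := circ_term_sub H0; exists k'; split=> //.
  exact: circk_mono H.
Qed.

Lemma plus_free_circ n k (u v : rterm n) : plus_free u -> plus_free v -> plus_free (circ_term k u v).
Proof.
elim: k u v => [|k IH] u v hu hv //=.
case: k IH => [|k] IH //=; by rewrite hu IH.
Qed.

Lemma plus_free_qk n k (t : rterm n) : plus_free (qk k t).
Proof.
elim: t => [s|u IHu v IHv|u IHu v IHv|u IHu v IHv] //=; rewrite ?IHu ?IHv //.
exact: plus_free_circ.
Qed.

Lemma interp_refl n (A : Type) (R : 'I_n -> A -> A -> Prop) (t : rterm n) :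
  (forall i, reflexiveP (R i)) -> forall x, interp R t x x.
Proof.
move=> hR; elim: t => [s|u IHu v IHv|u IHu v IHv|u IHu v IHv] x //=.
- exact: hR.
- by exists x; split; [apply: IHu|exists x; split; [apply: IHv|]].
- by exists 1; split=> //; exists x; split; [apply: IHu|].
Qed.

Lemma circ_term_sup n (A : Type) (R : 'I_n -> A -> A -> Prop) (u v : rterm n) :
  (forall i, reflexiveP (R i)) ->
  forall k k' x y, 1 <= k' <= k -> circk k' (interp R u) (interp R v) x y ->
  interp R (circ_term k u v) x y.
Proof.
move=> hR k; elim: k u v => [|k IH] u v k' x y hk //=.
  lia.
case: k' hk => [|k'] hk //= [c [H1 H2]].
case: k IH hk => [|k] IH hk /=.
  have Hk : k' = 0 by lia.
  subst k'; by move: H2 => /= <-.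
case: k' hk H2 => [|k'] hk H2 /=.
  move: H2 => /= H2; subst c; exists y; split=> //; exists y; split=> //; exact: interp_refl.
exists c; split=> //; exists y; split=> //.
exact: (IH v u k'.+1).
Qed.

Lemma circk_evt (A : Type) (U V : nat -> A -> A -> Prop) (U0 V0 : A -> A -> Prop) :
  (forall x y, U0 x y -> exists k0, forall k, k0 <= k -> U k x y) ->
  (forall x y, V0 x y -> exists k0, forall k, k0 <= k -> V k x y) ->
  forall k' x y, circk k' U0 V0 x y -> exists k0, forall k, k0 <= k -> circk k' (U k) (V k) x y.
Proof.
move=> hU hV k'; elim: k' U V U0 V0 hU hV => [|k' IH] U V U0 V0 hU hV x y /=.
  by move=> ->; exists 0.
move=> [c [H1 H2]].
have [k1 h1] := hU _ _ H1.
have [k2 h2] := IH V U V0 U0 hV hU _ _ H2.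
exists (maxn k1 k2) => k hk; exists c; split; [apply: h1|apply: h2]; lia.
Qed.

Lemma qk_evt n (A : Type) (R : 'I_n -> A -> A -> Prop) (t : rterm n) :
  (forall i, reflexiveP (R i)) ->
  forall x y, interp R t x y -> exists k0, forall k, k0 <= k -> interp R (qk k t) x y.
Proof.
move=> hR; elim: t => [s|u IHu v IHv|u IHu v IHv|u IHu v IHv] x y /=.
- by exists 0.
- move=> [h1 h2]; have [k1 H1] := IHu _ _ h1; have [k2 H2] := IHv _ _ h2.
  exists (maxn k1 k2) => k hk; split; [apply: H1|apply: H2]; lia.
- move=> H.
  have [k0 H0] := (@circk_evt _ (fun k => interp R (qk k u)) (fun k => interp R (qk k v)) _ _ IHu IHv 2 x y H).
  by exists k0.
- move=> [k' [hk H]].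
  have [k0 H0] := (@circk_evt _ (fun k => interp R (qk k u)) (fun k => interp R (qk k v)) _ _ IHu IHv _ x y H).
  exists (maxn k0 k') => k hk'.
  apply: (circ_term_sup hR (k' := k')); first lia.
  apply: H0; lia.
Qed.

Fixpoint subst (S : signature) (V W : Type) (sg : V -> term S W) (t : term S V) : term S W :=
  match t with Var v => sg v | App f args => App f (fun i => subst sg (args i)) end.

Lemma eval_ext (S : signature) (A : algebra S) (V : Type) (e1 e2 : V -> A) t :
  (forall v, e1 v = e2 v) -> eval e1 t = eval e2 t.
Proof.
move=> h; elim: t => [v|f args IH] //=.
f_equal; apply: functional_extensionality => i; exact: IH.
Qed.

Lemma eval_subst (S : signature) (A : algebra S) (V W : Type) (e : W -> A) (sg : V -> term S W) t :
  eval e (subst sg t) = eval (fun v => eval e (sg v)) t.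
Proof.
elim: t => [v|f args IH] //=.
f_equal; apply: functional_extensionality => i; exact: IH.
Qed.

Lemma eval_compat (S : signature) (A : algebra S) (V : Type) (R : A -> A -> Prop) (e1 e2 : V -> A) t :
  compatible R -> (forall v, R (e1 v) (e2 v)) -> R (eval e1 t) (eval e2 t).
Proof.
move=> hc h; elim: t => [v|f args IH] //=.
by apply: hc.
Qed.

Lemma in_Ts n (p : rterm n) s x : x \in Ts p s -> (x.1, x.2, s) \in gedges p.
Proof.
rewrite /Ts => /mapP [e]; rewrite mem_filter => /andP [/eqP hs he] ->.
by move: he; case: e hs => [[i j] s'] /= ->.
Qed.

Lemma real_sat (S : signature) (Sigma : identities S) n (p Q : rterm n) :
  plus_free p -> plus_free Q -> realizes Sigma p Q -> sat_Crr Sigma p Q.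
Proof.
move=> hp hQ [tv Htv] A hA R hR a b Hab.
pose val0 := fun v : nat => if v == 0 then a else b.
have [val [hv hok]] := @graph_fwd n A R p 0 1 2 val0 hp erefl erefl Hab.
pose c := fun i => Defs.tval tv i val.
have hc : edges_ok R c (gedges Q).
  move=> [[i j] s] He /=.
  have [te Hte] := Htv i j s He.
  have [h1 h2] := Hte A hA val.
  rewrite /c -h1 -h2; apply: eval_compat; first exact: (hR s).1.
  move=> v; rewrite /ext_env; case: (split v) => [k|l]; first exact: (hR s).2.
  have := in_Ts (mem_nth (0, 0) (ltn_ord l)).
  move=> /hok /=; exact.
have := @graph_bwd n A R Q 0 1 2 c hQ hc.
by rewrite /c /Defs.tval /= !hv.
Qed.

Section Free.
Variables (S : signature) (Sigma : identities S) (m : nat).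

Definition equivT (t t' : term S 'I_m) : Prop :=
  forall A : algebra S, in_variety Sigma A -> forall env : 'I_m -> A, eval env t = eval env t'.

Definition cls (t : term S 'I_m) : term S 'I_m -> Prop := fun t' => equivT t t'.

Definition Fcar := {P : term S 'I_m -> Prop | exists t, P = cls t}.

Definition rep (x : Fcar) : term S 'I_m :=
  proj1_sig (constructive_indefinite_description _ (proj2_sig x)).

Lemma rep_spec x : proj1_sig x = cls (rep x).
Proof. rewrite /rep; case: constructive_indefinite_description => //. Qed.

Definition mk (t : term S 'I_m) : Fcar := exist _ (cls t) (ex_intro _ t erefl).

Lemma Fcar_eq (x y : Fcar) : proj1_sig x = proj1_sig y -> x = y.
Proof.
case: x y => [P hP] [P' hP'] /= e; subst P'; f_equal; apply: proof_irrelevance.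
Qed.

Lemma cls_eq t t' : equivT t t' -> cls t = cls t'.
Proof.
move=> h; apply: functional_extensionality => t''; apply: propositional_extensionality.
rewrite /cls /equivT; split=> h' A hA env.
- by rewrite -(h A hA env) (h' A hA env).
- by rewrite (h A hA env) (h' A hA env).
Qed.

Lemma cls_eq_inv t t' : cls t = cls t' -> equivT t t'.
Proof.
move=> e; have : cls t' t' by move=> A hA env.
by rewrite -e.
Qed.

Lemma mk_eq t t' : mk t = mk t' <-> equivT t t'.
Proof.
split.
- by move=> e; apply: cls_eq_inv; have := f_equal (@proj1_sig _ _) e.
- by move=> h; apply: Fcar_eq; exact: cls_eq.
Qed.

Lemma mk_rep x : mk (rep x) = x.
Proof. by apply: Fcar_eq; rewrite /= -rep_spec. Qed.

Lemma rep_mk t : equivT (rep (mk t)) t.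
Proof. by apply/mk_eq; rewrite mk_rep. Qed.

Definition Fop (f : sym S) (args : 'I_(ar f) -> Fcar) : Fcar :=
  mk (App f (fun i => rep (args i))).

Definition F : algebra S := @Algebra S Fcar Fop.

Lemma equivT_App f (a1 a2 : 'I_(ar f) -> term S 'I_m) :
  (forall i, equivT (a1 i) (a2 i)) -> equivT (App f a1) (App f a2).
Proof.
move=> h A hA env /=; f_equal; apply: functional_extensionality => i; exact: h.
Qed.

Lemma evalF (V : Type) (env : V -> F) t :
  eval env t = mk (subst (fun v => rep (env v)) t).
Proof.
elim: t => [v|f args IH] /=; first by rewrite mk_rep.
rewrite /Fop; apply/mk_eq; apply: equivT_App => i.
rewrite IH; exact: rep_mk.
Qed.

Lemma F_in : in_variety Sigma F.
Proof.
move=> s t hst env; rewrite !evalF; apply/mk_eq => A hA env'.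
rewrite !eval_subst; exact: hA.
Qed.

Lemma mk_eval (A : algebra S) (hA : in_variety Sigma A) (env : 'I_m -> A) t t' :
  mk t = mk t' -> eval env t = eval env t'.
Proof. by move/mk_eq => h; exact: h. Qed.

End Free.

Section Main.
Variables (S : signature) (Sigma : identities S) (n : nat) (p : rterm n).
Hypothesis hp : plus_free p.

Let m := nverts p.
Lemma hm : 2 <= m.
Proof. by have [h _] := @gr_range n p 0 1 2 erefl erefl. Qed.

Lemma vert_lt x s : x \in Ts p s -> x.1 < m /\ x.2 < m.
Proof. by move/in_Ts => he; have [_ h] := @gr_range n p 0 1 2 erefl erefl; apply: h he. Qed.

Let j0 : 'I_m := Ordinal (leq_trans (erefl : 0 < 2) hm).
Let FF := F Sigma m.
Definition aa : nat -> FF := fun v => mk Sigma (Var (insubd j0 v)).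

Definition RR (s : 'I_n) (x y : FF) : Prop :=
  exists te : term S 'I_(m + size (Ts p s)),
    eval (ext_env (m:=m) (L:=Ts p s) fst aa) te = x /\ eval (ext_env (m:=m) (L:=Ts p s) snd aa) te = y.

Lemma aa_val (j : 'I_m) : aa j = mk Sigma (Var j).
Proof. by rewrite /aa valKd. Qed.

Lemma ext_lshift (A : Type) L (proj : nat * nat -> nat) (b : nat -> A) (j : 'I_m) :
  ext_env (m:=m) (L:=L) proj b (lshift (size L) j) = b j.
Proof. by rewrite /ext_env (unsplitK (inl j)). Qed.

Lemma ext_rshift (A : Type) L (proj : nat * nat -> nat) (b : nat -> A) (l : 'I_(size L)) :
  ext_env (m:=m) (L:=L) proj b (rshift m l) = b (proj (nth (0, 0) L l)).
Proof. by rewrite /ext_env (unsplitK (inr l)). Qed.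

Lemma refl_te L (proj : nat * nat -> nat) (x : FF) :
  eval (ext_env (m:=m) (L:=L) proj aa) (subst (fun j => Var (lshift (size L) j)) (rep x)) = x.
Proof.
rewrite eval_subst /=.
have -> : eval (fun v : 'I_m => ext_env (m:=m) (L:=L) proj aa (lshift (size L) v)) (rep x)
   = eval (fun j : 'I_m => aa j) (rep x) by apply: eval_ext => v; rewrite ext_lshift.
rewrite evalF -{2}(mk_rep x); apply/mk_eq => A hA env.
rewrite eval_subst; apply: eval_ext => v.
by rewrite aa_val; apply: rep_mk.
Qed.

Lemma RR_Crr s : Crr (RR s).
Proof.
split.
- move=> f x y h.
  pose te := fun i => proj1_sig (constructive_indefinite_description _ (h i)).
  have hte : forall i, eval (ext_env (m:=m) (L:=Ts p s) fst aa) (te i) = x i /\ eval (ext_env (m:=m) (L:=Ts p s) snd aa) (te i) = y i.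
    by move=> i; rewrite /te; case: constructive_indefinite_description.
  exists (App f te); split=> /=; f_equal; apply: functional_extensionality => i.
    exact: (hte i).1.
  exact: (hte i).2.
- move=> x; exists (subst (fun j => Var (lshift (size (Ts p s)) j)) (rep x)).
  by rewrite !refl_te.
Qed.

Lemma p_holds : interp RR p (aa 0) (aa 1).
Proof.
apply: (@graph_bwd n FF RR p 0 1 2 aa hp) => [[[i j] s]] He /=.
have hin : (i, j) \in Ts p s.
  by apply/mapP; exists (i, j, s) => //; rewrite mem_filter eqxx.
have hl : index (i, j) (Ts p s) < size (Ts p s) by rewrite index_mem.
exists (Var (rshift m (Ordinal hl))); rewrite /= !ext_rshift /= nth_index //.
Qed.

Lemma L3 (A : algebra S) (hA : in_variety Sigma A) (a' : nat -> A) s (proj : nat * nat -> nat) v :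
  (forall x, x \in Ts p s -> proj x < m) ->
  eval (fun j : 'I_m => a' (nat_of_ord j)) (rep (ext_env (m:=m) (L:=Ts p s) proj aa v)) = ext_env (m:=m) (L:=Ts p s) proj a' v.
Proof.
move=> hpr; rewrite /ext_env; case: (split v) => [j|l].
  by rewrite aa_val (@rep_mk _ _ _ _ A hA).
rewrite /aa (@rep_mk _ _ _ _ A hA) /= val_insubd hpr //.
exact: mem_nth.
Qed.

Lemma build (Q : rterm n) : plus_free Q -> interp RR Q (aa 0) (aa 1) -> realizes Sigma p Q.
Proof.
move=> hQ H.
have [c [hc hok]] := @graph_fwd n FF RR Q 0 1 2 aa hQ erefl erefl H.
exists (fun i => rep (c i)) => i j s He.
have [te [h1 h2]] := hok (i, j, s) He.
exists te => A hA a'.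
have L2 : forall i, exists u, c i = mk Sigma u /\
    eval (fun j : 'I_m => a' (nat_of_ord j)) u = Defs.tval (fun i => rep (c i)) i a'.
  move=> k; case: (ltnP k 2) => hk.
    exists (Var (insubd j0 k)); rewrite hc //; split=> //=.
    have hk' : k < m by apply: leq_trans hk hm.
    rewrite val_insubd hk' /Defs.tval.
    by case: k hk {hk'} => [|[|]].
  exists (rep (c k)); rewrite mk_rep; split=> //.
  by rewrite /Defs.tval; case: k hk => [|[|]].
have key : forall (proj : nat * nat -> nat) k, (forall x, x \in Ts p s -> proj x < m) ->
    eval (ext_env (m:=m) (L:=Ts p s) proj aa) te = c k ->
    eval (ext_env (m:=m) (L:=Ts p s) proj a') te = Defs.tval (fun i => rep (c i)) k a'.
  move=> proj k hpr e.
  have [u [hu hu']] := L2 k.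
  rewrite -hu'; move: e; rewrite evalF hu => /(mk_eval hA (fun j : 'I_m => a' (nat_of_ord j))).
  rewrite eval_subst => <-; apply: eval_ext => v; by rewrite L3.
split; apply: key => //; move=> x /vert_lt [] //.
Qed.

End Main.

Theorem proposition4p5 (S : signature) (Sigma : identities S) (n : nat)
    (p q : rterm n) :
  plus_free p ->
  (sat_Crr Sigma p q <-> exists k : nat, 2 <= k /\ realizes Sigma p (qk k q)) /\
  (plus_free q -> (sat_Crr Sigma p q <-> realizes Sigma p q)).
Proof.
move=> hp.
have fwd_core : sat_Crr Sigma p q -> interp (@RR S Sigma n p) q (@aa S Sigma n p 0) (@aa S Sigma n p 1).
  move=> hs; apply: hs; [exact: F_in | exact: (@RR_Crr S Sigma n p) | exact: (@p_holds S Sigma n p hp)].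
split.
- split.
  + move=> hs; have H := fwd_core hs.
    have [k0 hk0] := qk_evt (fun i => (@RR_Crr S Sigma n p i).2) H.
    exists (maxn k0 2); split; first lia.
    apply: (@build S Sigma n p _ (plus_free_qk _ _)); apply: hk0; lia.
  + move=> [k [hk hr]] A hA R hR a b Hab.
    apply: (qk_sub (k:=k)).
    exact: (real_sat hp (plus_free_qk k q) hr hA hR Hab).
- move=> hq; split.
  + by move=> hs; apply: (@build S Sigma n p _ hq (fwd_core hs)).
  + by move=> hr; apply: real_sat.
Qed.
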